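(* For each librational traveling wave $f$ there exists a real number $\alpha_*>0$ with $\alpha_*\in\sigma(\mathrm{Q})$; and if in addition $c\neq0$, then $G_p(\alpha_* )>0$ for every such $\alpha_*$.
   Context: A traveling wave of speed $c$ ($c^2\neq1$) is a real solution $f$ of $(c^2-1)f''+\sin f=0$, with energy $E$ given by $\tfrac12(c^2-1)(f')^2+1-\cos f=E$; it is librational if $0<E<2$, and then periodic with fundamental period $T$ (smallest $T>0$ with $f(z+T)=f(z)\pmod{2\pi}$). Let $\gamma=1/(c^2-1)$. $\sigma(\mathrm{Q})$ is the set of $\lambda\in\mathbb{C}$ for which $q''+\gamma\cos(f(z))q=\gamma^2\lambda^2q$ has a nontrivial solution bounded on $\mathbb{R}$. Equation (P): $p''-2c\gamma\lambda p'+\gamma(\lambda^2+\cos f(z))p=0$, written as a first-order system for $(p,p')$ with fundamental matrix $F(z;\lambda)$, $F(0;\lambda)=I$; its Floquet multipliers $\rho_\pm(\lambda)$ are the eigenvalues of $F(T;\lambda)$. Define $G_p(\lambda)=\log|\rho_+(\lambda)|\log|\rho_-(\lambda)|$. *)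

(* Defs.v *)
From Stdlib Require Import Reals ZArith.
From Coquelicot Require Import Coquelicot.
Open Scope R_scope.

Definition gam (c : R) : R := / (c ^ 2 - 1).

Definition traveling_wave (c : R) (f : R -> R) : Prop :=
  c ^ 2 <> 1 /\
  forall z, ex_derive f z /\ ex_derive (Derive f) z /\
            (c ^ 2 - 1) * Derive (Derive f) z + sin (f z) = 0.

Definition wave_energy (c : R) (f : R -> R) (z : R) : R :=
  / 2 * (c ^ 2 - 1) * (Derive f z) ^ 2 + 1 - cos (f z).

Definition librational_wave (c : R) (f : R -> R) : Prop :=
  traveling_wave c f /\
  exists E, 0 < E < 2 /\ forall z, wave_energy c f z = E.

Definition period_mod_2pi (f : R -> R) (T : R) : Prop :=
  forall z, exists k : Z, f (z + T) = f z + 2 * PI * IZR k.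

Definition fundamental_period (f : R -> R) (T : R) : Prop :=
  0 < T /\ period_mod_2pi f T /\
  forall T', 0 < T' -> period_mod_2pi f T' -> T <= T'.

Definition in_sigmaQ (c : R) (f : R -> R) (lam : C) : Prop :=
  exists q q' q'' : R -> C,
    (exists z, q z <> 0%C) /\
    (exists M : R, forall z, Cmod (q z) <= M) /\
    forall z, is_derive q z (q' z) /\ is_derive q' z (q'' z) /\
      (q'' z + RtoC (gam c * cos (f z)) * q z
        = RtoC (gam c ^ 2) * (lam * lam) * q z)%C.

Definition solves_P (c : R) (f : R -> R) (lam : C) (p p' p'' : R -> C) : Prop :=
  forall z, is_derive p z (p' z) /\ is_derive p' z (p'' z) /\
    (p'' z - RtoC (2 * c * gam c) * lam * p' z
      + RtoC (gam c) * (lam * lam + RtoC (cos (f z))) * p z = 0)%C.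

(** (a, b, d, e) = F(T; lambda) = [[a, b], [d, e]], the monodromy matrix of the
    first-order system for (p, p'), with columns the solutions with
    initial data (1,0) and (0,1). *)
Definition monodromy (c : R) (f : R -> R) (lam : C) (T : R)
    (a b d e : C) : Prop :=
  exists p1 p1' p1'' p2 p2' p2'' : R -> C,
    solves_P c f lam p1 p1' p1'' /\ solves_P c f lam p2 p2' p2'' /\
    p1 0 = 1%C /\ p1' 0 = 0%C /\ p2 0 = 0%C /\ p2' 0 = 1%C /\
    a = p1 T /\ b = p2 T /\ d = p1' T /\ e = p2' T.

(** rho1, rho2 are the Floquet multipliers (eigenvalues, with multiplicity)
    of [[a, b], [d, e]]: x^2 - (a+e) x + (a e - b d) = (x - rho1)(x - rho2). *)
Definition eigenpair2 (a b d e rho1 rho2 : C) : Prop :=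
  (rho1 + rho2 = a + e /\ rho1 * rho2 = a * e - b * d)%C.

Definition Gp_pos (c : R) (f : R -> R) (T : R) (lam : C) : Prop :=
  forall a b d e, monodromy c f lam T a b d e ->
  forall rho1 rho2, eigenpair2 a b d e rho1 rho2 ->
  0 < ln (Cmod rho1) * ln (Cmod rho2).

(* Main.v *)
Require Import Defs.
From Stdlib Require Import Reals ZArith.
From Coquelicot Require Import Coquelicot.
From Stdlib Require Import Lra Lia Psatz Classical FunctionalExtensionality.
Open Scope R_scope.
Add Field C_field : C_field_theory.


Lemma der_Re (g : R -> C) x l : is_derive g x l -> is_derive (fun t => Re (g t)) x (Re l).
Proof.
  intros H. unfold is_derive in *.
  eapply filterdiff_ext_lin.
  apply (filterdiff_comp' g (fun t : C_R_NormedModule => fst t) x _ (fun t : C_R_NormedModule => fst t) H).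
  apply filterdiff_linear, is_linear_fst.
  intros y. simpl. reflexivity.
Qed.
Lemma der_Im (g : R -> C) x l : is_derive g x l -> is_derive (fun t => Im (g t)) x (Im l).
Proof.
  intros H. unfold is_derive in *.
  eapply filterdiff_ext_lin.
  apply (filterdiff_comp' g (fun t : C_R_NormedModule => snd t) x _ (fun t : C_R_NormedModule => snd t) H).
  apply filterdiff_linear, is_linear_snd.
  intros y. simpl. reflexivity.
Qed.
Lemma lin_RtoC : is_linear (K:=R_AbsRing) (U:=R_NormedModule) (V:=C_R_NormedModule) (fun r : R => RtoC r).
Proof.
  split.
  - intros. unfold RtoC. simpl. unfold plus; simpl. unfold prod_plus. simpl. f_equal.
    unfold plus; simpl. ring. 
  - intros. simpl. unfold scal; simpl. unfold prod_scal; simpl. unfold scal; simpl. unfold mult; simpl.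
    unfold RtoC; f_equal; ring.
  - exists 1. split. lra. intros. 
    simpl. unfold norm; simpl. unfold prod_norm; simpl. unfold norm; simpl. unfold abs; simpl.
    rewrite Rabs_R0. replace (Rabs x * (Rabs x * 1) + 0 * (0 * 1)) with (Rabs x * Rabs x) by ring.
    rewrite sqrt_square. lra. apply Rabs_pos.
Qed.
Lemma der_RtoC (g : R -> R) x l : is_derive g x l -> is_derive (fun t => RtoC (g t)) x (RtoC l).
Proof.
  intros H. unfold is_derive in *.
  eapply filterdiff_ext_lin.
  apply (filterdiff_comp' g (fun t : R => RtoC t) x _ (fun t : R => RtoC t) H).
  apply filterdiff_linear, lin_RtoC.
  intros y. simpl. unfold scal; simpl. unfold prod_scal; simpl. unfold scal; simpl. unfold mult; simpl.
  unfold RtoC; f_equal; ring.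
Qed.


Lemma der_f c f z : traveling_wave c f -> is_derive f z (Derive f z) /\ is_derive (Derive f) z (Derive (Derive f) z).
Proof. intros [_ H]. destruct (H z) as [H1 [H2 _]]. split; apply Derive_correct; auto. Qed.

Lemma RtoC_inj0 x : RtoC x = 0%C -> x = 0.
Proof. intros H. apply (f_equal fst) in H. simpl in H. exact H. Qed.

Lemma Cmod_RtoC_le1 x : Rabs x <= 1 -> Cmod (RtoC x) <= 1.
Proof. intros. rewrite Cmod_R. auto. Qed.

Lemma dcos c f z : traveling_wave c f -> is_derive (fun z => cos (f z / 2)) z (- / 2 * sin (f z / 2) * Derive f z).
Proof. intros Hw. destruct (der_f c f z Hw) as [H1 H2].
  auto_derive. exists (Derive f z); auto.
  change (Derive (fun x : R => f x) z) with (Derive f z). unfold Rdiv. field. Qed.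
Lemma dsin c f z : traveling_wave c f -> is_derive (fun z => sin (f z / 2)) z (/ 2 * cos (f z / 2) * Derive f z).
Proof. intros Hw. destruct (der_f c f z Hw) as [H1 H2].
  auto_derive. exists (Derive f z); auto.
  change (Derive (fun x : R => f x) z) with (Derive f z). unfold Rdiv. field. Qed.
Lemma ddcos c f z : traveling_wave c f -> is_derive (fun z => - / 2 * sin (f z / 2) * Derive f z) z
   (- / 4 * cos (f z / 2) * (Derive f z * Derive f z) - / 2 * sin (f z / 2) * Derive (Derive f) z).
Proof. intros Hw. destruct (der_f c f z Hw) as [H1 H2].
  auto_derive. repeat split; first [exists (Derive f z); exact H1 | exists (Derive (Derive f) z); exact H2].
  change (Derive (fun x : R => f x) z) with (Derive f z).
  change (Derive (fun x : R => Derive f x) z) with (Derive (Derive f) z).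
  unfold Rdiv. field. Qed.
Lemma ddsin c f z : traveling_wave c f -> is_derive (fun z => / 2 * cos (f z / 2) * Derive f z) z
   (- / 4 * sin (f z / 2) * (Derive f z * Derive f z) + / 2 * cos (f z / 2) * Derive (Derive f) z).
Proof. intros Hw. destruct (der_f c f z Hw) as [H1 H2].
  auto_derive. repeat split; first [exists (Derive f z); exact H1 | exists (Derive (Derive f) z); exact H2].
  change (Derive (fun x : R => f x) z) with (Derive f z).
  change (Derive (fun x : R => Derive f x) z) with (Derive (Derive f) z).
  unfold Rdiv. field. Qed.

Lemma zero_der (g : R -> R) x l : (forall z, g z = 0) -> is_derive g x l -> l = 0.
Proof. intros Hg Hd.
  assert (E : g = fun _ => 0) by (apply functional_extensionality; auto).
  subst g. apply is_derive_unique in Hd. rewrite Derive_const in Hd. auto. Qed.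

Lemma part1 c f : librational_wave c f -> exists alpha : R, 0 < alpha /\ in_sigmaQ c f (RtoC alpha).
Proof.
  intros [Hw [E [HE Hen]]].
  assert (Hc : c ^ 2 <> 1) by apply Hw.
  set (D := c ^ 2 - 1).
  assert (HD : D <> 0) by (unfold D; lra).
  assert (Hf1 : forall z, Derive f z * Derive f z = 2 * (E - 1 + cos (f z)) / D).
  { intros z. specialize (Hen z). unfold wave_energy in Hen. fold D in Hen. field_simplify_eq; auto. lra. }
  assert (Hf2 : forall z, Derive (Derive f) z = - sin (f z) / D).
  { intros z. destruct Hw as [_ Hw]. destruct (Hw z) as [_ [_ Hz]]. fold D in Hz. field_simplify_eq; auto. lra. }
  assert (Hsin : forall z, sin (f z) = 2 * sin (f z / 2) * cos (f z / 2)).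
  { intros z. rewrite <- sin_2a. f_equal. field. }
  assert (Hcs : forall z, cos (f z) = 1 - 2 * sin (f z / 2) * sin (f z / 2)).
  { intros z. rewrite <- cos_2a_sin. f_equal. field. }
  assert (Hcc : forall z, cos (f z) = 2 * cos (f z / 2) * cos (f z / 2) - 1).
  { intros z. rewrite <- cos_2a_cos. f_equal. field. }
  assert (Hsc : forall z, sin (f z / 2) ^ 2 + cos (f z / 2) ^ 2 = 1) by (intros; pose proof (sin2_cos2 (f z / 2)); unfold Rsqr in *; nra).
  destruct (Rlt_or_le 1 (c^2)) as [Hgt | Hle].
  -
    exists (sqrt ((1 - E/2) * D)).
    assert (Hpos : 0 < (1 - E/2) * D) by (unfold D; nra).
    split. apply sqrt_lt_R0; auto.
    exists (fun z => RtoC (cos (f z / 2))),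
           (fun z => RtoC (- / 2 * sin (f z / 2) * Derive f z)),
           (fun z => RtoC (- / 4 * cos (f z / 2) * (Derive f z * Derive f z) - / 2 * sin (f z / 2) * Derive (Derive f) z)).
    split; [|split].
    + destruct (classic (exists z, RtoC (cos (f z / 2)) <> 0%C)) as [?|Hn]; [auto | exfalso].
      assert (Hz : forall z, cos (f z / 2) = 0).
      { intros z. apply RtoC_inj0. apply NNPP. intros H. apply Hn. eauto. }
      pose proof (zero_der _ _ _ Hz (dcos c f 0 Hw)) as H0.
      specialize (Hsc 0). rewrite Hz in Hsc.
      assert (Hd0 : Derive f 0 = 0) by nra.
      specialize (Hen 0). unfold wave_energy in Hen. rewrite Hd0, Hcc, Hz in Hen. lra.
    + exists 1. intros z. apply Cmod_RtoC_le1. apply Rabs_le. apply COS_bound.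
    + intros z. split; [|split].
      * apply der_RtoC. apply (dcos c f z Hw).
      * apply der_RtoC. apply (ddcos c f z Hw).
      * rewrite <- !RtoC_mult, <- RtoC_plus. f_equal.
        rewrite sqrt_sqrt by lra. rewrite Hf1, Hf2, Hsin, Hcs.
        unfold gam. fold D. field. auto.
  - assert (Hlt : c ^ 2 < 1) by lra.
    exists (sqrt (- E / 2 * D)).
    assert (Hpos : 0 < - E / 2 * D) by (unfold D; nra).
    split. apply sqrt_lt_R0; auto.
    exists (fun z => RtoC (sin (f z / 2))),
           (fun z => RtoC (/ 2 * cos (f z / 2) * Derive f z)),
           (fun z => RtoC (- / 4 * sin (f z / 2) * (Derive f z * Derive f z) + / 2 * cos (f z / 2) * Derive (Derive f) z)).
    split; [|split].
    + destruct (classic (exists z, RtoC (sin (f z / 2)) <> 0%C)) as [?|Hn]; [auto | exfalso].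
      assert (Hz : forall z, sin (f z / 2) = 0).
      { intros z. apply RtoC_inj0. apply NNPP. intros H. apply Hn. eauto. }
      pose proof (zero_der _ _ _ Hz (dsin c f 0 Hw)) as H0.
      specialize (Hsc 0). rewrite Hz in Hsc.
      assert (Hd0 : Derive f 0 = 0) by nra.
      specialize (Hen 0). unfold wave_energy in Hen. rewrite Hd0, Hcs, Hz in Hen. lra.
    + exists 1. intros z. apply Cmod_RtoC_le1. apply Rabs_le. apply SIN_bound.
    + intros z. split; [|split].
      * apply der_RtoC. apply (dsin c f z Hw).
      * apply der_RtoC. apply (ddsin c f z Hw).
      * rewrite <- !RtoC_mult, <- RtoC_plus. f_equal.
        rewrite sqrt_sqrt by lra. rewrite Hf1, Hf2, Hsin, Hcc.
        unfold gam. fold D. field. auto.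
Qed.


Lemma Deta (g : R -> R) z l : is_derive g z l -> Derive (fun x => g x) z = l.
Proof. intros H. apply is_derive_unique. auto. Qed.

Ltac rwD := repeat match goal with H : is_derive ?g ?z ?l |- context [Derive (fun x => ?g x) ?z] => rewrite (Deta g z l H) end.
Ltac dsolve := auto_derive; repeat split; try (eexists; eassumption); rwD.

Definition realP (k : R) (B : R -> R) (u u' u'' : R -> R) : Prop :=
  forall z, is_derive u z (u' z) /\ is_derive u' z (u'' z) /\ u'' z = 2 * k * u' z - B z * u z.

Lemma nonincr (g dg : R -> R) : (forall x, is_derive g x (dg x)) -> (forall x, dg x <= 0) ->
  forall a b, a <= b -> g b <= g a.
Proof.
  intros Hd Hn a b Hab. destruct (Req_dec a b) as [->|Hne]; [lra|].
  destruct (MVT_gen g a b dg) as [x [_ Hx]].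
  - intros; auto.
  - intros x _. apply continuity_pt_filterlim. apply (ex_derive_continuous (K:=R_AbsRing) (V:=R_NormedModule)). eexists; eauto.
  - specialize (Hn x). nra.
Qed.

Lemma uniqP k B K u u' u'' : (forall z, Rabs (B z) <= K) -> realP k B u u' u'' ->
  u 0 = 0 -> u' 0 = 0 -> forall z, u z = 0 /\ u' z = 0.
Proof.
  intros HB HP H0 H0'.
  assert (HK : 0 <= K) by (specialize (HB 0); pose proof (Rabs_pos (B 0)); lra).
  set (C := 1 + 4 * Rabs k + K).
  set (h := fun z => u z ^ 2 + u' z ^ 2).
  set (dh := fun z => 2 * u z * u' z + 2 * u' z * u'' z).
  assert (Hd : forall z, is_derive h z (dh z)).
  { intros z. destruct (HP z) as [H1 [H2 _]]. unfold h, dh. dsolve. ring. }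
  assert (Hbd : forall z, Rabs (dh z) <= C * h z).
  { intros z. destruct (HP z) as [_ [_ H3]]. unfold dh, h. rewrite H3.
    set (U := u z). set (V := u' z). set (b := B z).
    assert (A1 : Rabs (2 * U * V) <= U ^ 2 + V ^ 2).
    { apply Rabs_le. pose proof (pow2_ge_0 (U - V)). pose proof (pow2_ge_0 (U + V)). split; nra. }
    assert (A2 : Rabs (4 * k * V ^ 2) <= 4 * Rabs k * (U ^ 2 + V ^ 2)).
    { rewrite !Rabs_mult. rewrite (Rabs_pos_eq 4) by lra. rewrite (Rabs_pos_eq (V^2)) by nra.
      pose proof (Rabs_pos k). nra. }
    assert (A3 : Rabs (b * (2 * U * V)) <= K * (U ^ 2 + V ^ 2)).
    { rewrite Rabs_mult. apply Rmult_le_compat; auto using Rabs_pos. apply HB. }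
    replace (2 * U * V + 2 * V * (2 * k * V - b * U)) with (2 * U * V + 4 * k * V ^ 2 - b * (2 * U * V)) by ring.
    eapply Rle_trans. apply Rabs_triang. eapply Rle_trans. apply Rplus_le_compat. apply Rabs_triang. rewrite Rabs_Ropp. apply Rle_refl.
    unfold C. nra. }
  assert (Hh0 : h 0 = 0) by (unfold h; rewrite H0, H0'; ring).
  assert (Hhpos : forall z, 0 <= h z) by (intros; unfold h; nra).
  assert (Hhz : forall z, h z = 0).
  { intros z. destruct (Rle_or_lt 0 z) as [Hz | Hz].
    - pose proof (nonincr (fun z => h z * exp (- (C * z))) (fun z => (dh z - C * h z) * exp (- (C * z)))) as N.
      assert (N1 : h z * exp (- (C * z)) <= h 0 * exp (- (C * 0))).
      { apply N; auto.
        - intros x. specialize (Hd x). dsolve. ring.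
        - intros x. pose proof (exp_pos (- (C * x))). specialize (Hbd x). pose proof (Rle_abs (dh x)). nra. }
      rewrite Hh0 in N1. pose proof (exp_pos (- (C * z))). specialize (Hhpos z). nra.
    - pose proof (nonincr (fun z => - (h z * exp (C * z))) (fun z => - ((dh z + C * h z) * exp (C * z)))) as N.
      assert (N1 : - (h 0 * exp (C * 0)) <= - (h z * exp (C * z))).
      { apply N; try lra.
        - intros x. specialize (Hd x). dsolve. ring.
        - intros x. pose proof (exp_pos (C * x)). specialize (Hbd x). pose proof (Rle_abs (- dh x)). rewrite Rabs_Ropp in H1. nra. }
      rewrite Hh0 in N1. pose proof (exp_pos (C * z)). specialize (Hhpos z). nra. }
  intros z. specialize (Hhz z). unfold h in Hhz. split; nra.
Qed.

Lemma realP_lin k B a b u u' u'' v v' v'' : realP k B u u' u'' -> realP k B v v' v'' ->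
  realP k B (fun z => a * u z + b * v z) (fun z => a * u' z + b * v' z) (fun z => a * u'' z + b * v'' z).
Proof.
  intros Hu Hv z. destruct (Hu z) as [U1 [U2 U3]]. destruct (Hv z) as [V1 [V2 V3]].
  split; [|split].
  - dsolve. ring.
  - dsolve. ring.
  - rewrite U3, V3. ring.
Qed.

Lemma realP_shift k B S u u' u'' : (forall z, B (z + S) = B z) -> realP k B u u' u'' ->
  realP k B (fun z => u (z + S)) (fun z => u' (z + S)) (fun z => u'' (z + S)).
Proof.
  intros HS Hu z. destruct (Hu (z + S)) as [U1 [U2 U3]].
  split; [|split].
  - dsolve. ring.
  - dsolve. ring.
  - rewrite U3, HS. ring.
Qed.

Lemma realP_ext k B u u' u'' v v' v'' : realP k B u u' u'' ->
  (forall z, v z = u z) -> (forall z, v' z = u' z) -> (forall z, v'' z = u'' z) -> realP k B v v' v''.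
Proof.
  intros Hu E1 E2 E3.
  replace v with u by (apply functional_extensionality; intros; rewrite E1; auto).
  replace v' with u' by (apply functional_extensionality; intros; rewrite E2; auto).
  replace v'' with u'' by (apply functional_extensionality; intros; rewrite E3; auto).
  auto.
Qed.

Section Fund.
Variables (k : R) (B : R -> R) (K : R).
Hypothesis HB : forall z, Rabs (B z) <= K.
Variables (P1 P1' P1'' P2 P2' P2'' : R -> R).
Hypothesis H1 : realP k B P1 P1' P1''.
Hypothesis H2 : realP k B P2 P2' P2''.
Hypothesis I1 : P1 0 = 1.
Hypothesis I1' : P1' 0 = 0.
Hypothesis I2 : P2 0 = 0.
Hypothesis I2' : P2' 0 = 1.

Lemma data u u' u'' : realP k B u u' u'' -> forall z,
  u z = u 0 * P1 z + u' 0 * P2 z /\ u' z = u 0 * P1' z + u' 0 * P2' z.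
Proof.
  intros Hu.
  pose proof (realP_lin k B 1 (-1) _ _ _ _ _ _ Hu (realP_lin k B (u 0) (u' 0) _ _ _ _ _ _ H1 H2)) as Hw.
  intros z. destruct (uniqP k B K _ _ _ HB Hw) with z as [W1 W2]; simpl.
  - rewrite I1, I2. ring.
  - rewrite I1', I2'. ring.
  - split; lra.
Qed.

Lemma CH T : (forall z, B (z + T) = B z) -> forall u u' u'', realP k B u u' u'' ->
  forall z, u (z + 2 * T) - (P1 T + P2' T) * u (z + T) + (P1 T * P2' T - P2 T * P1' T) * u z = 0.
Proof.
  intros HT u u' u'' Hu.
  assert (HT2 : forall z, B (z + 2 * T) = B z).
  { intros z. replace (z + 2 * T) with ((z + T) + T) by ring. rewrite !HT. auto. }
  pose proof (realP_shift k B T _ _ _ HT Hu) as Hv.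
  pose proof (realP_shift k B (2 * T) _ _ _ HT2 Hu) as Hv2.
  pose proof (realP_lin k B 1 1 _ _ _ _ _ _ Hv2
     (realP_lin k B (-(P1 T + P2' T)) (P1 T * P2' T - P2 T * P1' T) _ _ _ _ _ _ Hv Hu)) as Hw.
  destruct (data u u' u'' Hu T) as [D1 D2].
  destruct (data _ _ _ Hv T) as [D3 D4].
  replace (0 + T) with T in D3, D4 by ring.
  replace (T + T) with (0 + 2 * T) in D3, D4 by ring.
  intros z. destruct (uniqP k B K _ _ _ HB Hw) with z as [W1 W2]; simpl.
  - rewrite D3. replace (0 + T) with T by ring. rewrite D1, D2. ring.
  - rewrite D4. replace (0 + T) with T by ring. rewrite D1, D2. ring.
  - lra.
Qed.

Lemma abel T : 0 < T -> P1 T * P2' T - P2 T * P1' T = exp (2 * k * T).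
Proof.
  intros HT.
  pose proof (eq_is_derive (fun z => (P1 z * P2' z - P1' z * P2 z) * exp (- (2 * k * z))) 0 T) as E.
  simpl in E. rewrite I1, I1', I2, I2' in E.
  replace (exp (- (2 * k * 0))) with 1 in E by (rewrite Rmult_0_r, Ropp_0, exp_0; auto).
  assert (E' : 1 = (P1 T * P2' T - P1' T * P2 T) * exp (- (2 * k * T))).
  { replace 1 with ((1 * 1 - 0 * 0) * 1) by ring. apply E; auto.
    intros t _. destruct (H1 t) as [A1 [A2 A3]]. destruct (H2 t) as [B1 [B2 B3]].
    dsolve. rewrite A3, B3. change (@zero R_NormedModule) with 0. ring. }
  rewrite exp_Ropp in E'. pose proof (exp_pos (2 * k * T)).
  apply (Rmult_eq_reg_r (/ exp (2 * k * T))). rewrite Rinv_r by lra. rewrite E'. ring.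
  apply Rinv_neq_0_compat. lra.
Qed.
End Fund.


Lemma geom_zero v Bd r : 0 <= v -> 0 <= Bd -> 0 <= r < 1 -> (forall n, v <= Bd * r ^ n) -> v = 0.
Proof.
  intros Hv HB Hr Hn. destruct (Rle_lt_or_eq_dec 0 v Hv) as [Hp|]; [|auto].
  exfalso. assert (Hr' : Rabs r < 1) by (rewrite Rabs_pos_eq; lra).
  destruct (pow_lt_1_zero r Hr' (v / (Bd + 1))) as [N HN].
  { apply Rdiv_lt_0_compat; lra. }
  specialize (HN N (le_n N)). specialize (Hn N). rewrite Rabs_pos_eq in HN by (apply pow_le; lra).
  assert (Bd * r ^ N <= (Bd + 1) * r ^ N) by (pose proof (pow_le r N); nra).
  assert ((Bd + 1) * r ^ N < v).
  { apply (Rmult_lt_compat_l (Bd + 1)) in HN; [|lra]. field_simplify in HN; lra. }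
  lra.
Qed.

Lemma iter_mod (g : R -> C) x T : (forall s : R, g (s + T) = (x * g s)%C) ->
  forall n s, Cmod (g (s + INR n * T)) = Cmod x ^ n * Cmod (g s).
Proof.
  intros Hg n. induction n as [|n IH]; intros s.
  - simpl. replace (s + 0 * T) with s by ring. ring.
  - rewrite S_INR. replace (s + (INR n + 1) * T) with ((s + INR n * T) + T) by ring.
    rewrite Hg, Cmod_mult, IH. simpl. ring.
Qed.

Lemma recur_aux (Y : R -> R) (M T : R) (x1 x2 : C) : (forall s, Rabs (Y s) <= M) -> (exists s0, Y s0 <> 0) ->
  (x1 * x2 = 1)%C ->
  (forall s : R, RtoC (Y (s + 2 * T)%R) - (x1 + x2) * RtoC (Y (s + T)%R) + RtoC (Y s) = 0)%C ->
  1 < Cmod x1 -> Cmod x2 < 1 -> False.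
Proof.
  intros HY [s0 Hs0] H12 Hrec Hx1 Hx2.
  assert (HM : 0 <= M) by (specialize (HY 0); pose proof (Rabs_pos (Y 0)); lra).
  set (b := fun s : R => (RtoC (Y (s + T)%R) - x2 * RtoC (Y s))%C).
  set (c := fun s : R => (RtoC (Y (s + T)%R) - x1 * RtoC (Y s))%C).
  assert (Hr : forall s : R, RtoC (Y (s + T + T)%R) = ((x1 + x2) * RtoC (Y (s + T)%R) - RtoC (Y s))%C).
  { intros s. replace (s + T + T) with (s + 2 * T) by ring. specialize (Hrec s).
    transitivity (RtoC (Y (s + 2 * T)%R) - (RtoC (Y (s + 2 * T)%R) - (x1 + x2) * RtoC (Y (s + T)%R) + RtoC (Y s)))%C.
    rewrite Hrec. ring. ring. }
  assert (Hb : forall s : R, b (s + T)%R = (x1 * b s)%C).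
  { intros s. unfold b. rewrite Hr.
    transitivity ((x1 + x2) * RtoC (Y (s + T)%R) - x1 * x2 * RtoC (Y s) - x2 * RtoC (Y (s + T)%R))%C.
    rewrite H12. ring. ring. }
  assert (Hc : forall s : R, c (s + T)%R = (x2 * c s)%C).
  { intros s. unfold c. rewrite Hr.
    transitivity ((x1 + x2) * RtoC (Y (s + T)%R) - x1 * x2 * RtoC (Y s) - x1 * RtoC (Y (s + T)%R))%C.
    rewrite H12. ring. ring. }
  assert (Hbd : forall (x : C) (s : R), Cmod (RtoC (Y (s + T)%R) - x * RtoC (Y s))%C <= M + Cmod x * M).
  { intros x s. unfold Cminus. eapply Rle_trans. apply Cmod_triangle.
    rewrite Cmod_opp, Cmod_mult, !Cmod_R. pose proof (HY (s + T)). pose proof (HY s).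
    pose proof (Cmod_ge_0 x). nra. }
  assert (Hb0 : forall s : R, b s = 0%C).
  { intros s. apply Cmod_eq_0.
    set (r := / Cmod x1).
    apply (geom_zero _ (M + Cmod x2 * M) r).
    - apply Cmod_ge_0.
    - pose proof (Cmod_ge_0 x2). nra.
    - unfold r. split. left. apply Rinv_0_lt_compat; lra.
      rewrite <- Rinv_1. apply Rinv_lt_contravar; lra.
    - intros n. pose proof (iter_mod b x1 T Hb n s) as E.
      assert (Hbn : Cmod (b (s + INR n * T)) <= M + Cmod x2 * M) by apply Hbd.
      assert (Hone : r ^ n * Cmod x1 ^ n = 1).
      { rewrite <- Rpow_mult_distr. unfold r. rewrite Rinv_l by lra. apply pow1. }
      replace (Cmod (b s)) with (r ^ n * (Cmod x1 ^ n * Cmod (b s))) by (rewrite <- Rmult_assoc, Hone; ring).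
      rewrite <- E. rewrite Rmult_comm. apply Rmult_le_compat_r. apply pow_le. unfold r. left. apply Rinv_0_lt_compat; lra.
      auto. }
  assert (Hc0 : forall s : R, c s = 0%C).
  { intros s. apply Cmod_eq_0.
    apply (geom_zero _ (M + Cmod x1 * M) (Cmod x2)).
    - apply Cmod_ge_0.
    - pose proof (Cmod_ge_0 x1). nra.
    - split; auto. apply Cmod_ge_0.
    - intros n. pose proof (iter_mod c x2 T Hc n (s - INR n * T)) as E.
      replace (s - INR n * T + INR n * T) with s in E by ring. rewrite E.
      rewrite (Rmult_comm (M + _)). apply Rmult_le_compat_l. apply pow_le, Cmod_ge_0.
      apply Hbd. }
  apply Hs0.
  assert (E : ((x1 - x2) * RtoC (Y s0))%C = 0%C).
  { transitivity (b s0 - c s0)%C. unfold b, c. ring. rewrite Hb0, Hc0. ring. }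
  apply (f_equal Cmod) in E. rewrite Cmod_mult, Cmod_0, Cmod_R in E.
  assert (Hne : (x1 - x2)%C <> 0%C).
  { intros Heq. assert (x1 = x2).
    { transitivity ((x1 - x2) + x2)%C. ring. rewrite Heq. ring. }
    subst. lra. }
  apply Cmod_gt_0 in Hne. apply Rmult_integral in E. destruct E as [E|E]. lra.
  apply Rabs_eq_0 in E. auto.
Qed.

Lemma recur (Y : R -> R) (M T : R) (x1 x2 : C) : (forall s, Rabs (Y s) <= M) -> (exists s0, Y s0 <> 0) ->
  (x1 * x2 = 1)%C ->
  (forall s : R, RtoC (Y (s + 2 * T)%R) - (x1 + x2) * RtoC (Y (s + T)%R) + RtoC (Y s) = 0)%C ->
  Cmod x1 = 1 /\ Cmod x2 = 1.
Proof.
  intros HY Hs H12 Hrec.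
  assert (Hm : Cmod x1 * Cmod x2 = 1) by (rewrite <- Cmod_mult, H12; apply Cmod_1).
  pose proof (Cmod_ge_0 x1). pose proof (Cmod_ge_0 x2).
  destruct (Rtotal_order (Cmod x1) 1) as [Hl|[He|Hg]].
  - exfalso. apply (recur_aux Y M T x2 x1); auto.
    rewrite <- H12. ring. intros s. rewrite <- (Hrec s). ring. nra. 
  - split; auto. rewrite He in Hm. lra.
  - exfalso. apply (recur_aux Y M T x1 x2); auto. nra.
Qed.


Lemma cosZ x k : cos (x + 2 * PI * IZR k) = cos x.
Proof.
  destruct k as [|p|p].
  - rewrite Rmult_0_r, Rplus_0_r. auto.
  - assert (Hp : IZR (Z.pos p) = INR (Pos.to_nat p)) by (rewrite INR_IZR_INZ, positive_nat_Z; auto).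
    rewrite Hp. rewrite <- (cos_period x (Pos.to_nat p)). apply f_equal. ring.
  - replace (IZR (Z.neg p)) with (- INR (Pos.to_nat p)).
    2:{ rewrite INR_IZR_INZ, positive_nat_Z. rewrite <- Ropp_Ropp_IZR. auto. }
    rewrite <- (cos_period (x + 2 * PI * - INR (Pos.to_nat p)) (Pos.to_nat p)). apply f_equal. ring.
Qed.

Lemma C_of_Im0 (w : C) : Im w = 0 -> w = RtoC (Re w).
Proof. destruct w as [w1 w2]. simpl. intros ->. reflexivity. Qed.

Lemma compP c f al p p' p'' : solves_P c f (RtoC al) p p' p'' ->
  realP (c * gam c * al) (fun z => gam c * (al ^ 2 + cos (f z)))
        (fun z => Re (p z)) (fun z => Re (p' z)) (fun z => Re (p'' z)) /\
  realP (c * gam c * al) (fun z => gam c * (al ^ 2 + cos (f z)))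
        (fun z => Im (p z)) (fun z => Im (p' z)) (fun z => Im (p'' z)).
Proof.
  intros H. split; intros z; destruct (H z) as [A1 [A2 A3]]; (split; [|split]).
  - apply der_Re; auto.
  - apply der_Re; auto.
  - apply (f_equal Re) in A3. destruct (p z), (p' z), (p'' z). simpl in *. nra.
  - apply der_Im; auto.
  - apply der_Im; auto.
  - apply (f_equal Im) in A3. destruct (p z), (p' z), (p'' z). simpl in *. nra.
Qed.

Lemma part2 c f : librational_wave c f -> c <> 0 ->
   forall alpha : R, 0 < alpha -> in_sigmaQ c f (RtoC alpha) ->
   forall T : R, fundamental_period f T -> Gp_pos c f T (RtoC alpha).
Proof.
  intros [Hw _] Hc0 al Hal [q [q' [q'' [[z0 Hz0] [[M HM] Hq]]]]] T [HT [Hper _]].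
  intros a b d e [p1 [p1' [p1'' [p2 [p2' [p2'' [S1 [S2 [I1 [I1' [I2 [I2' [Ea [Eb [Ed Ee]]]]]]]]]]]]]]]
         rho1 rho2 [Hsum Hprod].
  assert (Hc : c ^ 2 <> 1) by apply Hw.
  set (g := gam c).
  assert (Hg : g <> 0) by (unfold g, gam; apply Rinv_neq_0_compat; lra).
  set (k := c * g * al).
  set (B := fun z => g * (al ^ 2 + cos (f z))).
  set (K := Rabs g * (al ^ 2 + 1)).
  assert (HB : forall z, Rabs (B z) <= K).
  { intros z. unfold B, K. rewrite Rabs_mult. apply Rmult_le_compat_l. apply Rabs_pos.
    pose proof (COS_bound (f z)). apply Rabs_le. nra. }
  assert (HBT : forall z, B (z + T) = B z).
  { intros z. unfold B. destruct (Hper z) as [m Hm]. rewrite Hm, cosZ. auto. }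
  assert (HY : exists y y' y'' : R -> R, (forall s, Rabs (y s) <= M) /\ (exists s0, y s0 <> 0) /\
     forall z, is_derive y z (y' z) /\ is_derive y' z (y'' z) /\
       y'' z = g ^ 2 * al ^ 2 * y z - g * cos (f z) * y z).
  { assert (Hcomp : forall z, Re (q'' z) = g ^ 2 * al ^ 2 * Re (q z) - g * cos (f z) * Re (q z) /\
                             Im (q'' z) = g ^ 2 * al ^ 2 * Im (q z) - g * cos (f z) * Im (q z)).
    { intros z. destruct (Hq z) as [_ [_ E]]. fold g in E.
      pose proof (f_equal Re E) as E1. pose proof (f_equal Im E) as E2.
      destruct (q z), (q'' z). simpl in *. split; nra. }
    destruct (Req_dec (Re (q z0)) 0) as [Hre | Hre].
    - exists (fun z => Im (q z)), (fun z => Im (q' z)), (fun z => Im (q'' z)). split; [|split].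
      + intros s. eapply Rle_trans; [|apply (HM s)]. eapply Rle_trans; [|apply Rmax_Cmod]. apply Rmax_r.
      + exists z0. intros Him. apply Hz0. destruct (q z0). simpl in *. subst. reflexivity.
      + intros z. destruct (Hq z) as [A1 [A2 _]]. split; [|split].
        apply der_Im; auto. apply der_Im; auto. apply Hcomp.
    - exists (fun z => Re (q z)), (fun z => Re (q' z)), (fun z => Re (q'' z)). split; [|split].
      + intros s. eapply Rle_trans; [|apply (HM s)]. apply re_le_Cmod.
      + exists z0. auto.
      + intros z. destruct (Hq z) as [A1 [A2 _]]. split; [|split].
        apply der_Re; auto. apply der_Re; auto. apply Hcomp. }
  destruct HY as [y [y' [y'' [HyM [Hy0 Hy]]]]].
  set (p := fun z => exp (k * z) * y z).
  assert (Hp : realP k B p (fun z => exp (k * z) * (y' z + k * y z))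
                 (fun z => exp (k * z) * (y'' z + 2 * k * y' z + k ^ 2 * y z))).
  { intros z. destruct (Hy z) as [A1 [A2 A3]]. unfold p. split; [|split].
    - dsolve. ring.
    - dsolve. ring.
    - rewrite A3. unfold B, k, g, gam. field. lra. }
  destruct (compP c f al _ _ _ S1) as [R1 J1].
  destruct (compP c f al _ _ _ S2) as [R2 J2].
  fold g k in R1, J1, R2, J2.
  change (fun z => g * (al ^ 2 + cos (f z))) with B in R1, J1, R2, J2.
  assert (Z1 := uniqP k B K _ _ _ HB J1). simpl in Z1.
  rewrite I1, I1' in Z1. specialize (Z1 eq_refl eq_refl).
  assert (Z2 := uniqP k B K _ _ _ HB J2). simpl in Z2.
  rewrite I2, I2' in Z2. specialize (Z2 eq_refl eq_refl).
  assert (Ha : a = RtoC (Re (p1 T))) by (rewrite Ea; apply C_of_Im0; apply Z1).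
  assert (Hb : b = RtoC (Re (p2 T))) by (rewrite Eb; apply C_of_Im0; apply Z2).
  assert (Hd : d = RtoC (Re (p1' T))) by (rewrite Ed; apply C_of_Im0; apply Z1).
  assert (He : e = RtoC (Re (p2' T))) by (rewrite Ee; apply C_of_Im0; apply Z2).
  assert (J1a : Re (p1 0) = 1) by (rewrite I1; reflexivity).
  assert (J1b : Re (p1' 0) = 0) by (rewrite I1'; reflexivity).
  assert (J2a : Re (p2 0) = 0) by (rewrite I2; reflexivity).
  assert (J2b : Re (p2' 0) = 1) by (rewrite I2'; reflexivity).
  pose proof (CH k B K HB _ _ _ _ _ _ R1 R2 J1a J1b J2a J2b T HBT _ _ _ Hp) as HCH.
  pose proof (abel k B _ _ _ _ _ _ R1 R2 J1a J1b J2a J2b T HT) as Habel.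
  simpl in HCH.
  set (E2 := exp (k * T)).
  assert (HE2 : 0 < E2) by apply exp_pos.
  assert (HE22 : exp (2 * k * T) = E2 * E2) by (unfold E2; rewrite <- exp_plus; apply f_equal; ring).
  set (x1 := (rho1 * RtoC (/ E2))%C).
  set (x2 := (rho2 * RtoC (/ E2))%C).
  assert (Hx12 : (x1 * x2 = 1)%C).
  { unfold x1, x2. transitivity (rho1 * rho2 * RtoC (/ E2 * / E2))%C.
    rewrite RtoC_mult. ring.
    rewrite Hprod, Ha, He, Hb, Hd, <- !RtoC_mult, <- RtoC_minus, <- RtoC_mult.
    rewrite Habel, HE22. f_equal. field. lra. }
  assert (Hxs : (x1 + x2)%C = RtoC ((Re (p1 T) + Re (p2' T)) / E2)).
  { unfold x1, x2. transitivity ((rho1 + rho2) * RtoC (/ E2))%C. ring.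
    rewrite Hsum, Ha, He, <- RtoC_plus, <- RtoC_mult. reflexivity. }
  assert (Hrec : forall s : R, (RtoC (y (s + 2 * T)%R) - (x1 + x2) * RtoC (y (s + T)%R) + RtoC (y s) = 0)%C).
  { intros s. rewrite Hxs, <- RtoC_mult, <- RtoC_minus, <- RtoC_plus.
    replace (y (s + 2 * T) - (Re (p1 T) + Re (p2' T)) / E2 * y (s + T) + y s) with 0. reflexivity.
    specialize (HCH s). unfold p in HCH. rewrite Habel, HE22 in HCH.
    replace (exp (k * (s + 2 * T))) with (exp (k * s) * E2 * E2) in HCH
      by (unfold E2; rewrite <- !exp_plus; apply f_equal; ring).
    replace (exp (k * (s + T))) with (exp (k * s) * E2) in HCH
      by (unfold E2; rewrite <- !exp_plus; apply f_equal; ring).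
    pose proof (exp_pos (k * s)) as Hks.
    apply (Rmult_eq_reg_l (exp (k * s) * E2 * E2)). 2:{ apply Rgt_not_eq. apply Rmult_gt_0_compat; [apply Rmult_gt_0_compat|]; lra. }
    rewrite Rmult_0_r, <- HCH. field. lra. }
  destruct (recur y M T x1 x2 HyM Hy0 Hx12 Hrec) as [Hm1 Hm2].
  assert (Hr1 : Cmod rho1 = E2).
  { replace rho1 with (x1 * RtoC E2)%C. rewrite Cmod_mult, Hm1, Cmod_R, Rabs_pos_eq; lra.
    unfold x1. transitivity (rho1 * RtoC (/ E2 * E2))%C. rewrite RtoC_mult. ring.
    rewrite Rinv_l by lra. ring. }
  assert (Hr2 : Cmod rho2 = E2).
  { replace rho2 with (x2 * RtoC E2)%C. rewrite Cmod_mult, Hm2, Cmod_R, Rabs_pos_eq; lra.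
    unfold x2. transitivity (rho2 * RtoC (/ E2 * E2))%C. rewrite RtoC_mult. ring.
    rewrite Rinv_l by lra. ring. }
  rewrite Hr1, Hr2. unfold E2. rewrite ln_exp.
  assert (Hk : k * T <> 0).
  { unfold k. intros H0. repeat (apply Rmult_integral in H0; destruct H0 as [H0|H0]); lra. }
  pose proof (Rsqr_pos_lt _ Hk). unfold Rsqr in *. lra.
Qed.

Theorem lemma3p13 (c : R) (f : R -> R) :
  librational_wave c f ->
  (exists alpha : R, 0 < alpha /\ in_sigmaQ c f (RtoC alpha)) /\
  (c <> 0 ->
   forall alpha : R, 0 < alpha -> in_sigmaQ c f (RtoC alpha) ->
   forall T : R, fundamental_period f T ->
   Gp_pos c f T (RtoC alpha)).
Proof.
  intros H. split. apply part1; auto. intros. eapply part2; eauto.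
Qed.
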